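(* Let $\mathcal{F}$ be a scaling-closed set of length spaces or $\mathbb{R}_{>0}$-weighted graphs. 1. If $f,g:\mathbb{N}\times\mathbb{R}\to\mathbb{R}$ are functions such that every member of $\mathcal{F}$ has the weak coarse Menger property with witness $(f(k,r),g(k,r))$, then every length space in $\mathcal{F}$ has the weak coarse Menger property with witness $(f(k,1),g(k,1)\cdot r)$. 2. If $f,g:\mathbb{N}\times\mathbb{R}\to\mathbb{R}$ are functions such that every member of $\mathcal{F}$ has the weak coarse Gallai property with witness $(f(k,r),g(k,r))$, then every length space in $\mathcal{F}$ has the weak coarse Gallai property with witness $(f(k,1),g(k,1)\cdot r)$. 3. If $f,g:\mathbb{N}\times\mathbb{R}_{>0}\times\mathbb{R}_{\ge0}\to\mathbb{R}$ are functions such that every member of $\mathcal{F}$ has the remote weak coarse Menger property with witness $(f(k,r,\ell),g(k,r,\ell))$, then every length space in $\mathcal{F}$ has the remote weak coarse Menger property with witness $(f(k,1,\frac{\ell}{r}),\,g(k,1,\frac{\ell}{r})\cdot r)$.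
   Context: A set $\mathcal{F}$ of metric spaces is scaling-closed if $(X,r\cdot d_X)\in\mathcal{F}$ for every $(X,d_X)\in\mathcal{F}$ and real $r>0$. A length space is a metric space in which any two points are joined by paths (rectifiable curves) of length arbitrarily close to their distance. An $\mathbb{R}_{>0}$-weighted graph is a graph with positive edge weights, viewed as the metric space on its vertices with distance the infimum total weight of a path; its paths are graph paths. A set is $(\alpha,\beta)$-centered if it lies in a union of at most $\alpha$ balls of radius at most $\beta$; distance between paths is the infimum of distances between their points. Paths from $A$ to $B$ start in $A$ and end in $B$; an $(\ell,A,B)$-path is a path from $a\in A$ to $b\in B$ with $d(a,b)\ge\ell$; an $A$-path joins two distinct points of $A$. A space has the weak coarse Menger property with witness $(f,g)$ if for all $k\in\mathbb{N}$, $r>0$, subsets $A,B$, either there are $k$ paths from $A$ to $B$ pairwise at distance at least $r$, or some $(f(k,r),g(k,r))$-centered set meets every path from $A$ to $B$; the weak coarse Gallai property with witness $(f,g)$ is the same with $A$-paths; the remote weak coarse Menger property with witness $(f,g)$ means for all $k$, $r>0$, $\ell\ge0$, $A,B$, either there are $k$ $(\ell,A,B)$-paths pairwise at distance at least $r$ or some $(f(k,r,\ell),g(k,r,\ell))$-centered set meets every $(\ell,A,B)$-path. *)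

(* Defs.v *)
From Stdlib Require Import Reals Lra List.
Open Scope R_scope.

Record space := Space { pt : Type; dist : pt -> pt -> R }.

Definition is_metric (X : space) : Prop :=
  (forall x y : pt X, 0 <= dist X x y) /\
  (forall x : pt X, dist X x x = 0) /\
  (forall x y : pt X, dist X x y = 0 -> x = y) /\
  (forall x y : pt X, dist X x y = dist X y x) /\
  (forall x y z : pt X, dist X x z <= dist X x y + dist X y z).

Definition scale_space (r : R) (X : space) : space :=
  Space (pt X) (fun x y => r * dist X x y).

Definition curve (X : space) (gamma : R -> pt X) : Prop :=
  forall t, 0 <= t <= 1 -> forall eps, 0 < eps ->
    exists delta, 0 < delta /\
      forall s, 0 <= s <= 1 -> Rabs (s - t) < delta ->
        dist X (gamma s) (gamma t) < eps.

Definition partition (t : nat -> R) (n : nat) : Prop :=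
  t 0%nat = 0 /\ t n = 1 /\ (forall i, (i < n)%nat -> t i <= t (S i)).

Fixpoint chord_sum (X : space) (gamma : R -> pt X) (t : nat -> R) (n : nat) : R :=
  match n with
  | O => 0
  | S m => chord_sum X gamma t m + dist X (gamma (t m)) (gamma (t (S m)))
  end.

Definition length_le (X : space) (gamma : R -> pt X) (L : R) : Prop :=
  forall t n, partition t n -> chord_sum X gamma t n <= L.

Definition rectifiable (X : space) (gamma : R -> pt X) : Prop :=
  exists L, length_le X gamma L.

Definition length_space (X : space) : Prop :=
  is_metric X /\
  forall x y : pt X, forall eps, 0 < eps ->
    exists gamma, curve X gamma /\ gamma 0 = x /\ gamma 1 = y /\
      length_le X gamma (dist X x y + eps).

Record gstruct (V : Type) := GStruct { adj : V -> V -> Prop; wt : V -> V -> R }.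
Arguments adj {V}.
Arguments wt {V}.

(* x :: l is a walk *)
Fixpoint walk {V : Type} (G : gstruct V) (x : V) (l : list V) : Prop :=
  match l with
  | nil => True
  | y :: l' => adj G x y /\ walk G y l'
  end.

Fixpoint walk_weight {V : Type} (G : gstruct V) (x : V) (l : list V) : R :=
  match l with
  | nil => 0
  | y :: l' => wt G x y + walk_weight G y l'
  end.

(* X is the vertex set of the R_{>0}-weighted graph G, with
   distance the infimum total weight of a walk *)
Definition wgraph (X : space) (G : gstruct (pt X)) : Prop :=
  is_metric X /\
  (forall x y, adj G x y -> adj G y x /\ wt G x y = wt G y x /\ 0 < wt G x y) /\
  (forall x y l, walk G x l -> last l x = y -> dist X x y <= walk_weight G x l) /\
  (forall x y eps, 0 < eps -> exists l, walk G x l /\ last l x = y /\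
       walk_weight G x l < dist X x y + eps).

Inductive member :=
  | LenSp (X : space)
  | WGraph (X : space) (G : gstruct (pt X)).

Definition mspace (m : member) : space :=
  match m with LenSp X => X | WGraph X _ => X end.

Definition valid_member (m : member) : Prop :=
  match m with
  | LenSp X => length_space X
  | WGraph X G => wgraph X G
  end.

Definition scale_member (r : R) (m : member) : member :=
  match m with
  | LenSp X => LenSp (scale_space r X)
  | WGraph X G =>
      WGraph (scale_space r X)
             (GStruct (pt X) (adj G) (fun x y => r * wt G x y))
  end.

Definition scaling_closed (F : member -> Prop) : Prop :=
  forall m r, F m -> 0 < r -> F (scale_member r m).

(* P is (the point set of) a path from a to b in m *)
Definition is_path (m : member) : pt (mspace m) -> pt (mspace m) -> (pt (mspace m) -> Prop) -> Prop :=
  match m return pt (mspace m) -> pt (mspace m) -> (pt (mspace m) -> Prop) -> Prop with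
  | LenSp X => fun a b P =>
      exists gamma, curve X gamma /\ rectifiable X gamma /\
        gamma 0 = a /\ gamma 1 = b /\
        (forall x, P x <-> exists t, 0 <= t <= 1 /\ gamma t = x)
  | WGraph X G => fun a b P =>
      exists l, walk G a l /\ last l a = b /\ NoDup (a :: l) /\
        (forall x, P x <-> In x (a :: l))
  end.

Definition centered (X : space) (alpha beta : R) (Z : pt X -> Prop) : Prop :=
  exists (n : nat) (c : nat -> pt X) (rad : nat -> R),
    INR n <= alpha /\ (forall i, (i < n)%nat -> rad i <= beta) /\
    forall z, Z z -> exists i, (i < n)%nat /\ dist X (c i) z <= rad i.

Definition dist_ge (X : space) (P Q : pt X -> Prop) (r : R) : Prop :=
  forall x y, P x -> Q y -> r <= dist X x y.

Definition AB_path (m : member) (A B : pt (mspace m) -> Prop) (P : pt (mspace m) -> Prop) : Prop :=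
  exists a b, A a /\ B b /\ is_path m a b P.

Definition A_path (m : member) (A : pt (mspace m) -> Prop) (P : pt (mspace m) -> Prop) : Prop :=
  exists a b, A a /\ A b /\ a <> b /\ is_path m a b P.

Definition lAB_path (m : member) (l : R) (A B : pt (mspace m) -> Prop) (P : pt (mspace m) -> Prop) : Prop :=
  exists a b, A a /\ B b /\ l <= dist (mspace m) a b /\ is_path m a b P.

Definition menger_alt (m : member) (cls : (pt (mspace m) -> Prop) -> Prop)
    (k : nat) (r alpha beta : R) : Prop :=
  (exists P : nat -> pt (mspace m) -> Prop,
     (forall i, (i < k)%nat -> cls (P i)) /\
     (forall i j, (i < k)%nat -> (j < k)%nat -> i <> j -> dist_ge (mspace m) (P i) (P j) r))
  \/
  (exists Z, centered (mspace m) alpha beta Z /\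
     forall Q, cls Q -> exists z, Z z /\ Q z).

Definition weak_coarse_menger (m : member) (f g : nat -> R -> R) : Prop :=
  forall (k : nat) (r : R) (A B : pt (mspace m) -> Prop), 0 < r ->
    menger_alt m (AB_path m A B) k r (f k r) (g k r).

Definition weak_coarse_gallai (m : member) (f g : nat -> R -> R) : Prop :=
  forall (k : nat) (r : R) (A : pt (mspace m) -> Prop), 0 < r ->
    menger_alt m (A_path m A) k r (f k r) (g k r).

Definition remote_weak_coarse_menger (m : member) (f g : nat -> R -> R -> R) : Prop :=
  forall (k : nat) (r l : R) (A B : pt (mspace m) -> Prop), 0 < r -> 0 <= l ->
    menger_alt m (lAB_path m l A B) k r (f k r l) (g k r l).

(* Main.v *)
Require Import Defs.
From Stdlib Require Import Reals Lra.
Open Scope R_scope.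

Lemma chord_scale X c g t n :
  chord_sum (scale_space c X) g t n = c * chord_sum X g t n.
Proof. induction n; simpl; [ring|]. rewrite IHn. ring. Qed.

Lemma curve_fw X c g : 0 < c -> curve X g -> curve (scale_space c X) g.
Proof.
  intros Hc H t Ht eps He. destruct (H t Ht (eps / c)) as [d [Hd Hs]].
  { apply Rdiv_lt_0_compat; lra. }
  exists d; split; auto. intros s Hs1 Hs2. simpl.
  specialize (Hs s Hs1 Hs2). apply (Rmult_lt_compat_l c) in Hs; auto.
  replace (c * (eps / c)) with eps in Hs by (field; lra). exact Hs.
Qed.

Lemma curve_bw X c g : 0 < c -> curve (scale_space c X) g -> curve X g.
Proof.
  intros Hc H t Ht eps He. destruct (H t Ht (eps * c)) as [d [Hd Hs]].
  { apply Rmult_lt_0_compat; lra. }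
  exists d; split; auto. intros s Hs1 Hs2.
  specialize (Hs s Hs1 Hs2). simpl in Hs.
  apply (Rmult_lt_reg_l c); auto. lra.
Qed.

Lemma rect_fw X c g : 0 < c -> rectifiable X g -> rectifiable (scale_space c X) g.
Proof.
  intros Hc [L HL]. exists (c * L). intros t n Hp. rewrite chord_scale.
  apply Rmult_le_compat_l; [lra|]. auto.
Qed.

Lemma rect_bw X c g : 0 < c -> rectifiable (scale_space c X) g -> rectifiable X g.
Proof.
  intros Hc [L HL]. exists (L / c). intros t n Hp.
  specialize (HL t n Hp). rewrite chord_scale in HL.
  apply (Rmult_le_reg_l c); auto. replace (c * (L / c)) with L by (field; lra). exact HL.
Qed.

Lemma path_scale X c a b P : 0 < c ->
  (is_path (LenSp (scale_space c X)) a b P <-> is_path (LenSp X) a b P).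
Proof.
  intros Hc; simpl; split; intros [g [H1 [H2 [H3 [H4 H5]]]]]; exists g.
  - split; [apply (curve_bw X c); auto|]. split; [apply (rect_bw X c); auto|]. auto.
  - split; [apply (curve_fw X c); auto|]. split; [apply (rect_fw X c); auto|]. auto.
Qed.

Lemma transfer X r (Hr : 0 < r) (cls cls' : (pt X -> Prop) -> Prop) k alpha beta :
  (forall P, cls' P <-> cls P) ->
  menger_alt (LenSp (scale_space (/ r) X)) cls' k 1 alpha beta ->
  menger_alt (LenSp X) cls k r alpha (beta * r).
Proof.
  intros Heq [[P [H1 H2]] | [Z [[n [c [rad [Hn [Hrad HZ]]]]] HQ]]].
  - left. exists P. split.
    + intros i Hi. apply Heq. auto.
    + intros i j Hi Hj Hij x y Hx Hy. specialize (H2 i j Hi Hj Hij x y Hx Hy).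
      simpl in H2. simpl.
      apply (Rmult_le_compat_l r) in H2; [|lra].
      replace (r * (/ r * Defs.dist X x y)) with (Defs.dist X x y) in H2 by (field; lra).
      lra.
  - right. exists Z. split.
    + exists n, c, (fun i => rad i * r). split; [auto|]. split.
      * intros i Hi. apply Rmult_le_compat_r; [lra|]. auto.
      * intros z Hz. destruct (HZ z Hz) as [i [Hi Hd]]. exists i. split; auto.
        simpl in Hd. simpl.
        apply (Rmult_le_compat_l r) in Hd; [|lra].
        replace (r * (/ r * Defs.dist X (c i) z)) with (Defs.dist X (c i) z) in Hd by (field; lra).
        lra.
    + intros Q HQ'. apply HQ. apply Heq. exact HQ'.
Qed.

Theorem lemma9p5 (F : member -> Prop) :
  (forall m, F m -> valid_member m) ->
  scaling_closed F ->
  (forall f g : nat -> R -> R,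
     (forall m, F m -> weak_coarse_menger m f g) ->
     forall X, F (LenSp X) ->
       weak_coarse_menger (LenSp X) (fun k _ => f k 1) (fun k r => g k 1 * r)) /\
  (forall f g : nat -> R -> R,
     (forall m, F m -> weak_coarse_gallai m f g) ->
     forall X, F (LenSp X) ->
       weak_coarse_gallai (LenSp X) (fun k _ => f k 1) (fun k r => g k 1 * r)) /\
  (forall f g : nat -> R -> R -> R,
     (forall m, F m -> remote_weak_coarse_menger m f g) ->
     forall X, F (LenSp X) ->
       remote_weak_coarse_menger (LenSp X)
         (fun k r l => f k 1 (l / r)) (fun k r l => g k 1 (l / r) * r)).
Proof.
  intros _ Hsc. split; [|split].
  - intros f g H X HX k r A B Hr.
    assert (HF : F (LenSp (scale_space (/ r) X))).
    { apply (Hsc (LenSp X) (/ r) HX). apply Rinv_0_lt_compat; lra. }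
    specialize (H _ HF k 1 A B Rlt_0_1).
    refine (transfer X r Hr _ _ k _ _ _ H). intros P.
    unfold AB_path. split; intros [a [b [Ha [Hb Hp]]]]; exists a, b;
      repeat split; auto; apply (path_scale X (/ r)); auto;
      apply Rinv_0_lt_compat; lra.
  - intros f g H X HX k r A Hr.
    assert (HF : F (LenSp (scale_space (/ r) X))).
    { apply (Hsc (LenSp X) (/ r) HX). apply Rinv_0_lt_compat; lra. }
    specialize (H _ HF k 1 A Rlt_0_1).
    refine (transfer X r Hr _ _ k _ _ _ H). intros P.
    unfold A_path. split; intros [a [b [Ha [Hb [Hab Hp]]]]]; exists a, b;
      repeat split; auto; apply (path_scale X (/ r)); auto;
      apply Rinv_0_lt_compat; lra.
  - intros f g H X HX k r l A B Hr Hl.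
    assert (HF : F (LenSp (scale_space (/ r) X))).
    { apply (Hsc (LenSp X) (/ r) HX). apply Rinv_0_lt_compat; lra. }
    assert (Hl' : 0 <= l / r) by (unfold Rdiv; apply Rmult_le_pos; [lra|left; apply Rinv_0_lt_compat; lra]).
    specialize (H _ HF k 1 (l / r) A B Rlt_0_1 Hl').
    refine (transfer X r Hr _ _ k _ _ _ H). intros P.
    unfold lAB_path. split; intros [a [b [Ha [Hb [Hd Hp]]]]]; exists a, b;
      repeat split; auto; try (apply (path_scale X (/ r)); auto;
      apply Rinv_0_lt_compat; lra); simpl in *.
    + apply (Rmult_le_compat_l r) in Hd; [|lra].
      replace (r * (l / r)) with l in Hd by (field; lra).
      replace (r * (/ r * Defs.dist X a b)) with (Defs.dist X a b) in Hd by (field; lra).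
      exact Hd.
    + unfold Rdiv. rewrite (Rmult_comm l). apply Rmult_le_compat_l; auto.
      left; apply Rinv_0_lt_compat; lra.
Qed.
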